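(* Let $(M,\Sigma)$ be a measurable space, $r\ge1$, and $\mu_1,\dots,\mu_r$ non-atomic countably additive finite measures on $\Sigma$. Let $S\in\Sigma$ with $\prod_{i=1}^r\mu_i(S)\neq0$. Then there exist pairwise disjoint measurable sets $R^1,\dots,R^r\subseteq S$ and a permutation $(l_1,\dots,l_r)$ of $\{1,\dots,r\}$ with $\mu_{l_k}(R^k)=\frac1r\mu_{l_k}(S)$ for each $k$ and $\mu_{l_j}(R^k)\le\frac1r\mu_{l_j}(S)$ for all $j>k$, together with a measurable subset $H\subseteq S$ such that $\mu_{l_1}(H)\ge 2^{-(r-1)}\mu_{l_1}(S)$ and $H$ has a gentleman's solution, i.e. a partition $H=F_1\sqcup\dots\sqcup F_r$ into measurable sets with $\mu_i(F_i)\le\mu_i(F_j)$ for all $i,j$.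
   Context: Partition elements may be empty. *)

(* Defs.v *)
From HB Require Import structures.
From mathcomp Require Import all_boot all_order all_algebra all_fingroup.
From mathcomp Require Import all_classical all_reals all_analysis.
Set Implicit Arguments. Unset Strict Implicit. Unset Printing Implicit Defensive.
Import Order.TTheory GRing.Theory Num.Theory.
Local Open Scope classical_set_scope.
Local Open Scope ereal_scope.

Definition is_atom d (T : measurableType d) (R : realType)
  (mu : set T -> \bar R) (A : set T) : Prop :=
  measurable A /\ 0 < mu A /\
  forall B, measurable B -> B `<=` A -> mu B = 0 \/ mu (A `\` B) = 0.

Definition non_atomic d (T : measurableType d) (R : realType)
  (mu : set T -> \bar R) : Prop := forall A, ~ is_atom mu A.

Definition gentleman_solution d (T : measurableType d) (R : realType) (r : nat)
  (mu : 'I_r -> set T -> \bar R) (H : set T) : Prop :=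
  exists F : 'I_r -> set T,
    (forall i, measurable (F i)) /\
    (forall i j, i != j -> F i `&` F j = set0) /\
    H = \bigcup_i F i /\
    (forall i j, mu i (F i) <= mu i (F j)).

(* Main.v *)
Require Import Defs.
From HB Require Import structures.
From mathcomp Require Import all_boot all_order all_algebra all_fingroup.
From mathcomp Require Import all_classical all_reals all_analysis.
From mathcomp Require Import ring lra zify.
Import Order.TTheory GRing.Theory Num.Theory.

Section Part1.
Local Open Scope classical_set_scope.
Local Open Scope ring_scope.

Section RealMeasure.
Context {d : measure_display} {T : measurableType d} {R : realType}.
Context (mu : {finite_measure set T -> \bar R}).

Definition rm (A : set T) : R := fine (mu A).

Lemma rmE A : measurable A -> mu A = (rm A)%:E.
Proof. by move=> mA; rewrite /rm fineK //; exact: fin_num_measure. Qed.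

Lemma rm_ge0 A : measurable A -> 0 <= rm A.
Proof. by move=> mA; rewrite -lee_fin -rmE //; exact: measure_ge0. Qed.

Lemma rm0 : rm set0 = 0.
Proof. by rewrite /rm measure0. Qed.

Lemma rmU A B : measurable A -> measurable B -> A `&` B = set0 ->
  rm (A `|` B) = rm A + rm B.
Proof.
move=> mA mB AB; apply/eqP; rewrite -eqe EFinD -!rmE //; last exact: measurableU.
by apply/eqP/measureU.
Qed.

Lemma rm_le A B : measurable A -> measurable B -> A `<=` B -> rm A <= rm B.
Proof.
move=> mA mB AB; rewrite -lee_fin -!rmE //; apply: le_measure => //; by rewrite inE.
Qed.

Lemma rmD A B : measurable A -> measurable B -> B `<=` A ->
  rm (A `\` B) = rm A - rm B.
Proof.
move=> mA mB BA.
have -> : rm A = rm (A `\` B) + rm B.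
  rewrite -rmU //; [|exact: measurableD|]; last first.
    by apply/seteqP; split => x // [[]].
  by rewrite setUC setDUK.
by rewrite addrK.
Qed.

Lemma rm_split (hna : non_atomic mu) A : measurable A -> 0 < rm A ->
  exists B, [/\ measurable B, B `<=` A, 0 < rm B & 0 < rm (A `\` B)].
Proof.
move=> mA A0.
case: (pselect (exists B, [/\ measurable B, B `<=` A, 0 < rm B & 0 < rm (A `\` B)])) => // nB.
exfalso; apply: (hna A); split => //; split; first by rewrite rmE // lte_fin.
move=> B mB BA.
have h1 := rm_ge0 _ mB; have h2 := rm_ge0 _ (measurableD mA mB).
case: (ltrP 0 (rm B)) => hB.
  case: (ltrP 0 (rm (A `\` B))) => hAB.
    by exfalso; apply: nB; exists B.
  by right; rewrite (rmE _ (measurableD mA mB)); congr (_%:E); apply/eqP; rewrite eq_le hAB h2.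
by left; rewrite (rmE _ mB); congr (_%:E); apply/eqP; rewrite eq_le hB h1.
Qed.

End RealMeasure.

End Part1.

Section Part2.
Local Open Scope classical_set_scope.
Local Open Scope ring_scope.

Lemma ex_min_pos (R : realType) (I : eqType) (s : seq I) (g : I -> R) :
  (forall i, i \in s -> 0 < g i) -> exists2 e, 0 < e & forall i, i \in s -> e <= g i.
Proof.
elim: s => [|x s IH] h; first by exists 1.
have [e e0 he] : exists2 e, 0 < e & forall i, i \in s -> e <= g i.
  by apply: IH => i iS; apply: h; rewrite inE iS orbT.
exists (Num.min (g x) e); first by rewrite lt_min e0 h ?mem_head.
move=> i; rewrite inE => /orP[/eqP->|iS]; rewrite ge_min ?lexx //.
by rewrite he ?orbT.
Qed.

Section Tool.
Context {d : measure_display} {T : measurableType d} {R : realType} {r : nat}.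
Context (mu : 'I_r -> {finite_measure set T -> \bar R}).
Context (hna : forall i, non_atomic (mu i)).

Local Notation m i := (rm (mu i)).

Definition nu (P : pred 'I_r) (A : set T) : R := \sum_(i < r | P i) m i A.

Lemma nu_ge0 (P : pred 'I_r) A : measurable A -> 0 <= nu P A.
Proof. by move=> mA; apply: sumr_ge0 => i _; exact: rm_ge0. Qed.

Lemma nuU (P : pred 'I_r) A B : measurable A -> measurable B -> A `&` B = set0 ->
  nu P (A `|` B) = nu P A + nu P B.
Proof.
by move=> mA mB AB; rewrite /nu -big_split /=; apply: eq_bigr => i _; rewrite rmU.
Qed.

Lemma nu_le (P : pred 'I_r) A B : measurable A -> measurable B -> A `<=` B -> nu P A <= nu P B.
Proof. by move=> mA mB AB; apply: ler_sum => i _; exact: rm_le. Qed.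

Lemma m_le_nu (P : pred 'I_r) i A : measurable A -> P i -> m i A <= nu P A.
Proof.
move=> mA Pi; rewrite /nu (bigD1 i) //= lerDl.
by apply: sumr_ge0 => j _; exact: rm_ge0.
Qed.

Lemma nu_half (P : pred 'I_r) Y : measurable Y -> 0 < nu P Y ->
  exists Z, [/\ measurable Z, Z `<=` Y, 0 < nu P Z & nu P Z <= nu P Y / 2].
Proof.
move=> mY Y0.
have [i Pi mi] : exists2 i, P i & 0 < m i Y.
  apply: contrapT => h; move: Y0; apply/negP; rewrite -leNgt.
  apply: sumr_le0 => i Pi; rewrite leNgt; apply/negP => hi; apply: h; by exists i.
have [B [mB BY B0 YB0]] := rm_split _ (hna i) _ mY mi.
have mYB := measurableD mY mB.
have nB : 0 < nu P B by apply: lt_le_trans (m_le_nu _ _ _ mB Pi).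
have nYB : 0 < nu P (Y `\` B) by apply: lt_le_trans (m_le_nu _ _ _ mYB Pi).
have hs : nu P Y = nu P B + nu P (Y `\` B).
  rewrite -nuU //; first by rewrite setDUK.
  by apply/seteqP; split => x // [? []].
case: (lerP (nu P B) (nu P Y / 2)) => h.
  by exists B.
exists (Y `\` B); split; [exact: mYB | by move=> x [] | exact: nYB | lra].
Qed.

Lemma nu_small (P : pred 'I_r) Y : measurable Y -> 0 < nu P Y -> forall k,
  exists Z, [/\ measurable Z, Z `<=` Y, 0 < nu P Z & nu P Z <= nu P Y / 2 ^+ k].
Proof.
move=> mY Y0; elim=> [|k [Z [mZ ZY Z0 Zle]]].
  by exists Y; split => //; rewrite expr0 divr1.
have [W [mW WZ W0 Wle]] := nu_half _ _ mZ Z0.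
exists W; split => //; first exact: subset_trans ZY.
apply: (le_trans Wle); rewrite exprS invfM mulrA ler_pdivrMr ?ltr0n //.
rewrite mulrAC divfK ?pnatr_eq0 //; by rewrite mulrC.
Qed.

Lemma nu_eps (P : pred 'I_r) Y eps : measurable Y -> 0 < nu P Y -> 0 < eps ->
  exists Z, [/\ measurable Z, Z `<=` Y, 0 < nu P Z & nu P Z <= eps].
Proof.
move=> mY Y0 e0.
set k := Num.Def.archi_bound (nu P Y / eps).
have hk : nu P Y / eps < k%:R by apply: archi_boundP; rewrite divr_ge0 // ltW.
have [Z [mZ ZY Z0 Zle]] := nu_small _ _ mY Y0 k.
exists Z; split => //; apply: (le_trans Zle).
have k2 : (k < 2 ^ k)%N by apply: ltn_expl.
have h2 : k%:R <= (2:R) ^+ k by rewrite -natrX ler_nat ltnW.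
rewrite ler_pdivrMr ?exprn_gt0 //.
move: hk; rewrite ltr_pdivrMr // => hk.
apply: (le_trans (ltW hk)); rewrite mulrC ler_pM2l //.
Qed.

End Tool.

Section Tool2.
Context {d : measure_display} {T : measurableType d} {R : realType} {r : nat}.
Context (mu : 'I_r -> {finite_measure set T -> \bar R}).
Context (hna : forall i, non_atomic (mu i)).

Local Notation m i := (rm (mu i)).

Lemma nu0 (P : pred 'I_r) : nu mu P set0 = 0.
Proof. by rewrite /nu big1 // => i _; rewrite rm0. Qed.

Lemma tool (P : pred 'I_r) (c : 'I_r -> R) (X : set T) :
  measurable X -> (forall i, P i -> 0 <= c i) -> (exists j, P j /\ c j <= m j X) ->
  exists Y, [/\ measurable Y, Y `<=` X, (forall i, P i -> m i Y <= c i)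
    & exists j, P j /\ m j Y = c j].
Proof.
move=> mX c0 [j0 [Pj0 cj0]].
pose good A := [/\ measurable A, A `<=` X & forall i, P i -> m i A <= c i].
pose E A := [set x : R | exists Z, [/\ measurable Z, Z `<=` X `\` A,
   good (A `|` Z) & x = nu mu P Z]].
have hsup A : good A -> has_sup (E A).
  case=> mA AX cA; split.
    by exists 0, set0; split => //; rewrite ?setU0 ?nu0.
  exists (nu mu P X) => x [Z [mZ ZXA _ ->]]; apply: nu_le => //.
  by move=> z /ZXA [].
have step A : good A -> exists Z, [/\ measurable Z, Z `<=` X `\` A,
    good (A `|` Z) & sup (E A) / 2 <= nu mu P Z].
  move=> gA.
  case: (lerP (sup (E A)) 0) => s0.
    exists set0; split => //; first by rewrite setU0.
    rewrite nu0; lra.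
  have s2 : 0 < sup (E A) / 2 by lra.
  have [x [Z [mZ ZXA gZ ->]] hx] := sup_adherent s2 (hsup A gA).
  exists Z; split => //; lra.
have [f hf] : {f : set T -> set T & forall A, good A -> [/\ measurable (f A),
    f A `<=` X `\` A, good (A `|` f A) & sup (E A) / 2 <= nu mu P (f A)]}.
  apply: (@choice _ _ (fun A Z => good A -> [/\ measurable Z,
    Z `<=` X `\` A, good (A `|` Z) & sup (E A) / 2 <= nu mu P Z])) => A.
  case: (pselect (good A)) => gA.
    by have [Z hZ] := step A gA; exists Z.
  by exists set0.
pose Rn n := iter n (fun A => A `|` f A) set0.
have gR n : good (Rn n).
  elim: n => [|n IH].
    split; [exact: measurable0 | by [] | move=> i Pi; rewrite /Rn /= rm0; exact: c0].
  by case: (hf _ IH).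
have mRn n : measurable (Rn n) by case: (gR n).
have RnS n : Rn n.+1 = Rn n `|` f (Rn n) by [].
have sub n k : (n <= k)%N -> Rn n `<=` Rn k.
  move=> nk; rewrite -(subnK nk); elim: (k - n)%N => [|j IH] //.
  rewrite addSn RnS; apply: subset_trans IH _; by move=> x hx; left.
have Rmono : {homo Rn : n k / (n <= k)%N >-> (n <= k)%O}.
  by move=> n k nk; apply/subsetPset; exact: sub.
pose Rinf := \bigcup_n Rn n.
have mRinf : measurable Rinf by apply: bigcupT_measurable.
have RinfX : Rinf `<=` X by move=> x [n _]; case: (gR n) => _ /(_ x).
have cRinf i : P i -> m i Rinf <= c i.
  move=> Pi; rewrite -lee_fin -rmE //.
  have h := nondecreasing_cvg_mu (mu := mu i) mRn mRinf Rmono.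
  rewrite -(cvg_lim _ h) //; apply: lime_le; first exact: cvgP h.
  apply: nearW => n /=; rewrite rmE // lee_fin; by case: (gR n) => _ _ /(_ i Pi).
have nuR n : nu mu P (Rn n) <= nu mu P X.
  by apply: nu_le => //; case: (gR n).
have nuRS n : nu mu P (Rn n.+1) = nu mu P (Rn n) + nu mu P (f (Rn n)).
  have [mf fX _ _] := hf _ (gR n).
  rewrite RnS nuU //; apply/seteqP; split => x // [h1 /fX [_ h2]].
  by apply: h2.
suff [j [Pj mj]] : exists j, P j /\ m j Rinf = c j.
  by exists Rinf; split => //; exists j.
apply: contrapT => hno.
have lt i : P i -> m i Rinf < c i.
  move=> Pi; rewrite lt_neqAle cRinf // andbT; apply/eqP => h; apply: hno.
  by exists i.
have [e e0 he] : exists2 e, 0 < e & forall i, i \in enum [pred i | P i] ->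
    e <= c i - m i Rinf.
  by apply: ex_min_pos => i; rewrite mem_enum => /lt; rewrite subr_gt0.
case: (ltrP 0 (nu mu P (X `\` Rinf))) => hXR.
  have [Z [mZ ZXR Z0 Ze]] := nu_eps mu hna P _ _ (measurableD mX mRinf) hXR e0.
  have inE' n : E (Rn n) (nu mu P Z).
    exists Z; split => //.
      move=> x /ZXR [Xx nR]; split => // hx; apply: nR; by exists n.
    have dis : Rn n `&` Z = set0.
      apply/seteqP; split => x // [h1 /ZXR [_ h2]]; apply: h2; by exists n.
    split; first exact: measurableU.
      move=> x [hx|/ZXR [] //]; by case: (gR n) => _ /(_ x hx).
    move=> i Pi; rewrite rmU //.
    have h1 : m i (Rn n) <= m i Rinf by apply: rm_le => // x hx; exists n.
    have h2 : m i Z <= e by apply: le_trans (m_le_nu mu _ _ _ mZ Pi) Ze.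
    have h3 := he i; rewrite mem_enum in h3; have := h3 Pi; lra.
  have hfn n : nu mu P Z / 2 <= nu mu P (f (Rn n)).
    case: (hf _ (gR n)) => _ _ _ h; apply: le_trans h.
    have := sup_upper_bound (hsup _ (gR n)) (inE' n); lra.
  have lin n : n%:R * (nu mu P Z / 2) <= nu mu P (Rn n).
    elim: n => [|n IH]; first by rewrite mul0r /Rn /= nu0.
    rewrite nuRS -addn1 natrD mulrDl mul1r; have := hfn n; lra.
  set k := Num.Def.archi_bound (nu mu P X / (nu mu P Z / 2)).
  have hk : nu mu P X / (nu mu P Z / 2) < k%:R.
    by apply: archi_boundP; rewrite divr_ge0 // ?nu_ge0 //; lra.
  move: hk; rewrite ltr_pdivrMr; last lra.
  have := lin k; have := nuR k; lra.
have h0 : m j0 (X `\` Rinf) <= 0.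
  apply: le_trans hXR; exact: m_le_nu (measurableD mX mRinf) Pj0.
move: h0; rewrite rmD //; have := lt j0 Pj0; lra.
Qed.

Lemma sierp i (X : set T) (v : R) : measurable X -> 0 <= v -> v <= m i X ->
  exists Y, [/\ measurable Y, Y `<=` X & m i Y = v].
Proof.
move=> mX v0 vX.
have [Y [mY YX _ [j [/eqP-> hj]]]] := tool (pred1 i) (fun _ => v) X mX (fun _ _ => v0)
  (ex_intro _ i (conj (eqxx i) vX)).
by exists Y.
Qed.

End Tool2.

End Part2.

Section Part3.
Local Open Scope classical_set_scope.
Local Open Scope ring_scope.

Section Carve.
Context {d : measure_display} {T : measurableType d} {R : realType} {r : nat}.
Context (mu : 'I_r -> {finite_measure set T -> \bar R}).
Context (hna : forall i, non_atomic (mu i)).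

Local Notation m i := (rm (mu i)).

Lemma carve_seq i (Z : set T) (I : eqType) (dd : I -> R) (s : seq I) :
  measurable Z -> (forall k, 0 <= dd k) -> uniq s -> \sum_(k <- s) dd k <= m i Z ->
  exists (D : I -> set T) (U : set T), [/\ measurable U, U `<=` Z,
    m i U = \sum_(k <- s) dd k,
    (forall k, measurable (D k) /\ D k `<=` U) &
    [/\ (forall k l, k != l -> D k `&` D l = set0),
        (forall k, k \in s -> m i (D k) = dd k) &
        (forall k, k \notin s -> D k = set0)]].
Proof.
move=> mZ d0; elim: s => [|x s IH] /=.
  move=> _ _; exists (fun _ => set0), set0; split.
  - exact: measurable0.
  - by [].
  - by rewrite rm0 big_nil.
  - by move=> k; split; [exact: measurable0|].
  - split; [move=> k l _; exact: set0I | by [] | by []].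
move=> /andP[xs us]; rewrite big_cons => hs.
have hs' : \sum_(k <- s) dd k <= m i Z by have := d0 x; lra.
have [D [U [mU UZ mUs DU [Ddis Dm D0]]]] := IH us hs'.
have mZU := measurableD mZ mU.
have hx : dd x <= m i (Z `\` U) by rewrite rmD // mUs; lra.
have [Y [mY YZU mYx]] := sierp mu hna i _ _ mZU (d0 x) hx.
have YD k : Y `&` D k = set0.
  apply/seteqP; split => z // [/YZU [_ nU] /(DU k).2 hU]; exact: nU.
exists (fun k => if k == x then Y else D k), (U `|` Y); split.
- exact: measurableU.
- by move=> z [/UZ // | /YZU []].
- rewrite rmU // ?mUs ?mYx; first lra.
  by apply/seteqP; split => z // [hU /YZU [_ nU]].
- move=> k; case: eqP => _; split.
  + exact: mY.
  + by move=> z hz; right.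
  + exact: (DU k).1.
  + by move=> z /(DU k).2; left.
split.
- move=> k l kl; case: (eqVneq k x) => [kx|kx]; case: (eqVneq l x) => [lx|lx].
  + by move: kl; rewrite kx lx eqxx.
  + by rewrite YD.
  + by rewrite setIC YD.
  + exact: Ddis.
- move=> k; rewrite inE => /orP[/eqP->|ks]; first by rewrite eqxx.
  case: eqP => [kx|_]; last exact: Dm.
  by move: xs; rewrite -kx ks.
- move=> k; rewrite inE negb_or => /andP[kx ks]; rewrite (negbTE kx); exact: D0.
Qed.

Lemma carve i (Z : set T) (I : finType) (Rz : {set I}) (dd : I -> R) :
  measurable Z -> (forall k, 0 <= dd k) -> \sum_(k in Rz) dd k <= m i Z ->
  exists D : I -> set T, [/\ (forall k, measurable (D k) /\ D k `<=` Z),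
    (forall k l, k != l -> D k `&` D l = set0),
    (forall k, k \in Rz -> m i (D k) = dd k) &
    (forall k, k \notin Rz -> D k = set0)].
Proof.
move=> mZ d0 hs.
have hs' : \sum_(k <- enum Rz) dd k <= m i Z by rewrite big_enum.
have [D [U [mU UZ _ DU [Ddis Dm D0]]]] := carve_seq i Z _ dd _ mZ d0 (enum_uniq (pred_of_set Rz)) hs'.
exists D; split => //.
- move=> k; have [h1 h2] := DU k; split => //; exact: subset_trans UZ.
- by move=> k kR; apply: Dm; rewrite mem_enum.
- by move=> k kR; apply: D0; rewrite mem_enum.
Qed.

End Carve.

End Part3.

Section Part4.
Local Open Scope classical_set_scope.
Local Open Scope ring_scope.

Lemma free_index r (f : nat -> 'I_r) k : (k < r)%N -> exists i, forall j, (j < k)%N -> f j != i.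
Proof.
move=> kr; apply: contrapT => h.
have sub : ([set: 'I_r] \subset [set x in map f (iota 0 k)])%SET.
  apply/fintype.subsetP => x _; rewrite inE; apply: contrapT => nx; apply: h; exists x => j jk.
  apply/eqP => fx; apply: nx; apply/mapP; exists j => //; by rewrite mem_iota.
have := subset_leq_card sub; rewrite cardsT card_ord cardsE.
move=> h2; have := leq_trans h2 (card_size _); rewrite size_map size_iota.
by rewrite leqNgt kr.
Qed.

Section Rs.
Context {d : measure_display} {T : measurableType d} {R : realType} {r : nat}.
Context (mu : 'I_r -> {finite_measure set T -> \bar R}).
Context (hna : forall i, non_atomic (mu i)).
Context (S : set T) (mS : measurable S).

Local Notation m i := (rm (mu i)).
Local Notation cc i := (m i S / r%:R).

Definition RsInv k (Rs : nat -> set T) (l : nat -> 'I_r) (Lr : set T) :=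
  [/\ measurable Lr /\ Lr `<=` S,
      (forall j, (j < k)%N -> [/\ measurable (Rs j), Rs j `<=` S & Rs j `&` Lr = set0]),
      (forall j j', (j < k)%N -> (j' < k)%N -> j != j' -> Rs j `&` Rs j' = set0),
      (forall j, (j < k)%N -> m (l j) (Rs j) = cc (l j)) &
      (forall j j', (j < j')%N -> (j' < k)%N -> m (l j') (Rs j) <= cc (l j'))] /\
  [/\ (forall j j', (j < k)%N -> (j' < k)%N -> l j = l j' -> j = j'),
      (forall i, (forall j, (j < k)%N -> l j != i) -> (r - k)%:R * cc i <= m i Lr) &
      (forall i, (forall j, (j < k)%N -> l j != i) -> forall j, (j < k)%N -> m i (Rs j) <= cc i)].

Lemma cc_ge0 i : 0 <= cc i.
Proof. by apply: divr_ge0; [exact: rm_ge0 | exact: ler0n]. Qed.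


Lemma RsInv_step k Rs l Lr : (k < r)%N -> RsInv k Rs l Lr ->
  exists Rs' l' Lr', RsInv k.+1 Rs' l' Lr'.
Proof.
move=> kr [[[mL LS] hR hdis hl hle] [linj hg hh]].
pose P : pred 'I_r := [pred i | [forall j : 'I_k, l j != i]].
have PE i : P i <-> forall j, (j < k)%N -> l j != i.
  split; first by move=> /forallP h j jk; exact: (h (Ordinal jk)).
  by move=> h; apply/forallP => j; apply: h.
have [i0 hi0] := free_index _ l _ kr.
have ex : exists j, P j /\ cc j <= m j Lr.
  exists i0; split; first by apply/PE.
  apply: le_trans (hg _ hi0); rewrite -subn_gt0 in kr.
  rewrite -[X in X <= _]mul1r ler_wpM2r ?cc_ge0 // ler1n //.
have [Y [mY YL Yle [t [Pt mt]]]] := tool mu hna P (fun i => cc i) Lr mL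
  (fun i _ => cc_ge0 i) ex.
exists (fun j => if j == k then Y else Rs j), (fun j => if j == k then t else l j),
  (Lr `\` Y).
have YR j : (j < k)%N -> Rs j `&` Y = set0.
  move=> jk; apply/seteqP; split => x // [h1 /YL h2].
  by case: (hR j jk) => _ _ /seteqP [/(_ x (conj h1 h2))].
split; split.
- split; [exact: measurableD | by move=> x [/LS]].
- move=> j; rewrite ltnS leq_eqVlt => /orP[/eqP->|jk].
    rewrite eqxx; split; [exact: mY | by move=> x /YL /LS |].
    by apply/seteqP; split => x // [h1 [_ h2]].
  rewrite (ltn_eqF jk); case: (hR j jk) => h1 h2 h3; split; [exact: h1 | exact: h2 |].
  apply/seteqP; split => x // [hx [hL _]].
  by move/seteqP: h3 => [/(_ x (conj hx hL))].
- move=> j j'; rewrite ltnS leq_eqVlt => /orP[/eqP->|jk];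
    rewrite ltnS leq_eqVlt => /orP[/eqP->|jk'] jj'.
  + by move: jj'; rewrite eqxx.
  + by rewrite eqxx (ltn_eqF jk') setIC YR.
  + by rewrite eqxx (ltn_eqF jk) YR.
  + by rewrite (ltn_eqF jk) (ltn_eqF jk'); apply: hdis.
- move=> j; rewrite ltnS leq_eqVlt => /orP[/eqP->|jk]; first by rewrite eqxx.
  by rewrite (ltn_eqF jk); apply: hl.
- move=> j j' jj'; rewrite ltnS leq_eqVlt => /orP[/eqP ej'|jk'].
    subst j'; rewrite eqxx (ltn_eqF jj').
    by move/PE: Pt => Pt; apply: hh => //.
  rewrite (ltn_eqF jk') (ltn_eqF (ltn_trans jj' jk')); exact: hle.
- move=> j j'; rewrite ltnS leq_eqVlt => /orP[/eqP->|jk];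
    rewrite ltnS leq_eqVlt => /orP[/eqP->|jk'] //.
  + rewrite eqxx (ltn_eqF jk') => ht; move/PE: Pt => /(_ j' jk').
    by rewrite ht eqxx.
  + rewrite eqxx (ltn_eqF jk) => ht; move/PE: Pt => /(_ j jk).
    by rewrite ht eqxx.
  + rewrite (ltn_eqF jk) (ltn_eqF jk'); exact: linj.
- move=> i hi.
  have it : t != i by have := hi k (ltnSn k); rewrite eqxx.
  have hi' : forall j, (j < k)%N -> l j != i.
    move=> j jk; have := hi j (ltnW jk); rewrite (ltn_eqF jk) //.
  have Pi : P i by apply/PE.
  rewrite rmD //; have := hg i hi'; have := Yle i Pi.
  have -> : (r - k)%N = (r - k.+1).+1 by rewrite subnSK.
  rewrite -addn1 natrD mulrDl mul1r; lra.
- move=> i hi j; rewrite ltnS leq_eqVlt => /orP[/eqP->|jk].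
    rewrite eqxx; apply: Yle; apply/PE => j2 jk2.
    by have := hi j2 (ltnW jk2); rewrite (ltn_eqF jk2).
  rewrite (ltn_eqF jk); apply: hh => // j' jk'.
  by have := hi j' (ltnW jk'); rewrite (ltn_eqF jk').
Qed.

End Rs.

Section RsFinal.
Context {d : measure_display} {T : measurableType d} {R : realType} {r : nat}.
Context (mu : 'I_r -> {finite_measure set T -> \bar R}).
Context (hna : forall i, non_atomic (mu i)).
Context (S : set T) (mS : measurable S).

Local Notation m i := (rm (mu i)).
Local Notation cc i := (m i S / r%:R).

Lemma RsInv_all (hr : (0 < r)%N) k : (k <= r)%N ->
  exists Rs l Lr, RsInv mu S k Rs l Lr.
Proof.
elim: k => [_|k IH kr].
  exists (fun _ => set0), (fun _ => Ordinal hr), S; split; split.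
  - by split; [exact: mS|].
  - by [].
  - by [].
  - by [].
  - by [].
  - by [].
  - move=> i _; rewrite subn0 mulrC divfK //; by rewrite pnatr_eq0 -lt0n.
  - by [].
have [Rs [l [Lr h]]] := IH (ltnW kr).
exact: (RsInv_step mu hna S mS k Rs l Lr kr h).
Qed.

Lemma rs_final (hr : (0 < r)%N) : exists (Rs : 'I_r -> set T) (l : {perm 'I_r}),
  [/\ (forall k, measurable (Rs k) /\ Rs k `<=` S),
      (forall k k', k != k' -> Rs k `&` Rs k' = set0),
      (forall k, m (l k) (Rs k) = cc (l k)) &
      (forall k j : 'I_r, (k < j)%N -> m (l j) (Rs k) <= cc (l j))].
Proof.
have [Rs [l [Lr [[_ hR hdis hl hle] [linj _ _]]]]] := RsInv_all hr r (leqnn r).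
have inj : injective (fun k : 'I_r => l k).
  by move=> k k' /linj h; apply/val_inj/h.
exists (fun k : 'I_r => Rs k), (perm inj); split.
- by move=> k; case: (hR k (ltn_ord k)).
- move=> k k' kk'; apply: hdis => //.
- by move=> k; rewrite permE; apply: hl.
- by move=> k j kj; rewrite permE; apply: hle.
Qed.

End RsFinal.

End Part4.

Section Part5.
Local Open Scope ring_scope.

Section Comb.
Context {R : realType}.

Lemma seq_argmax {I : eqType} (f : I -> R) x (s : seq I) :
  exists2 z, z \in x :: s & forall y, y \in x :: s -> f y <= f z.
Proof.
elim: s x => [|y s IH] x.
  by exists x; rewrite ?mem_head // => y; rewrite inE => /eqP->.
have [z zs hz] := IH y.
case: (lerP (f x) (f z)) => h.
  exists z; first by rewrite inE zs orbT.
  by move=> w; rewrite inE => /orP[/eqP->//|ws]; apply: hz.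
exists x; first exact: mem_head.
move=> w; rewrite inE => /orP[/eqP->//|ws].
by apply: le_trans (hz w ws) (ltW h).
Qed.

Lemma ex_argmax {I : finType} {A : {set I}} (f : I -> R) : A != finset.set0 ->
  exists2 x, x \in A & forall y, y \in A -> f y <= f x.
Proof.
case/finset.set0Pn => x0 xA.
have : x0 \in enum A by rewrite mem_enum.
case E : (enum A) => [//|x s] _.
have [z zs hz] := seq_argmax f x s.
exists z; first by rewrite -mem_enum E.
by move=> y yA; apply: hz; rewrite -E mem_enum.
Qed.

Lemma ex_argmin {I : finType} {A : {set I}} (f : I -> R) : A != finset.set0 ->
  exists2 x, x \in A & forall y, y \in A -> f x <= f y.
Proof.
move=> A0; have [x xA hx] := ex_argmax (fun i => - f i) A0.
by exists x => // y /hx; rewrite lerN2.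
Qed.

Lemma top_sub (I : finType) (f : I -> R) (s : nat) (A : {set I}) : (s <= #|A|)%N ->
  exists K : {set I}, [/\ K \subset A, #|K| = s &
    forall x y, x \in K -> y \in A :\: K -> f y <= f x].
Proof.
elim: s A => [|s IH] A hs.
  by exists finset.set0; split; rewrite ?finset.sub0set ?cards0 // => x y; rewrite inE.
have A0 : A != finset.set0 by rewrite -card_gt0; apply: leq_ltn_trans hs.
have [x xA hx] := ex_argmax f A0.
have hs' : (s <= #|A :\ x|)%N by rewrite (cardsD1 x A) xA add1n ltnS in hs.
have [K [KA cK hK]] := IH _ hs'.
have xK : x \notin K.
  by apply/negP => xK; move: (fintype.subsetP KA x xK); rewrite !inE eqxx.
exists (x |: K); split.
- rewrite finset.subUset finset.sub1set xA /=; apply: fintype.subset_trans KA _; exact: finset.subD1set.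
- by rewrite cardsU1 xK cK.
- move=> x' y; rewrite !inE => /orP[/eqP->|x'K] /andP[hy yA].
    by apply: hx.
  rewrite negb_or in hy; case/andP: hy => yx yK.
  by apply: hK => //; rewrite !inE yK yx.
Qed.

Lemma ostat (I : finType) (M : {set I}) (v : I -> R) (t : nat) :
  (0 < t)%N -> (t <= #|M|)%N ->
  exists lam, [/\ exists2 j, j \in M & lam = v j,
    (t <= #|[set i in M | (v i <= lam)%R]|)%N,
    (#|[set i in M | (v i < lam)%R]| < t)%N &
    forall x, (t <= #|[set i in M | (v i <= x)%R]|)%N -> lam <= x].
Proof.
move=> t0 tM.
pose C := [set j in M | (t <= #|[set i in M | (v i <= v j)%R]|)%N].
have key (E : {set I}) : E \subset M -> (t <= #|E|)%N ->
    exists k, [/\ k \in C, k \in E & forall i, i \in E -> v i <= v k].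
  move=> EM tE.
  have E0 : E != finset.set0 by rewrite -card_gt0; apply: leq_trans tE.
  have [k kE hk] := ex_argmax v E0.
  exists k; split => //; rewrite inE (fintype.subsetP EM) //=.
  apply: leq_trans tE _; apply: subset_leq_card; apply/fintype.subsetP => i iE.
  by rewrite inE (fintype.subsetP EM) //= hk.
have [k0 [k0C _ _]] := key M (subxx M) tM.
have C0 : C != finset.set0 by apply/finset.set0Pn; exists k0.
have [j jC hj] := ex_argmin v C0.
move: (jC); rewrite inE => /andP[jM tj].
have subM (P : pred I) : [set i in M | P i] \subset M.
  by apply/fintype.subsetP => i; rewrite inE => /andP[].
exists (v j); split => //.
- by exists j.
- case: (leqP t #|[set i in M | (v i < v j)%R]|) => // h.
  have [k [kC kE _]] := key _ (subM _) h.
  move: kE; rewrite inE => /andP[_ hk]; have := hj k kC.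
  by rewrite leNgt hk.
- move=> x hx.
  have [k [kC kE _]] := key _ (subM _) hx.
  move: kE; rewrite inE => /andP[_ hk]; exact: le_trans (hj k kC) hk.
Qed.

Lemma sdr (I J : finType) (x0 : I) (j0 : J) (s : seq I) (A : I -> {set J})
  (B : {set J}) : uniq s ->
  (forall j, (j < size s)%N -> (#|B| + j < #|A (nth x0 s j)|)%N) ->
  exists pick : I -> J, (forall x, x \in s -> pick x \in A x :\: B) /\
    {in s &, injective pick}.
Proof.
elim: s B => [|x s IH] B.
  by move=> _ _; exists (fun _ => j0); split.
move=> /andP[xs us] h.
have h0 := h 0%N (ltn0Sn _); rewrite addn0 /= in h0.
have [y yA] : exists y, y \in A x :\: B.
  apply/finset.set0Pn; apply: contraTneq h0 => e.
  rewrite -leqNgt; apply: subset_leq_card; apply/fintype.subsetP => z zA.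
  apply: contraT => zB; have : z \in A x :\: B by rewrite inE zB zA.
  by rewrite e inE.
have hB : forall j, (j < size s)%N -> (#|y |: B| + j < #|A (nth x0 s j)|)%N.
  move=> j js; have := h j.+1 js; rewrite /= => hj.
  apply: leq_ltn_trans hj; rewrite cardsU1 addnS -addSn leq_add2r.
  by case: (y \in B).
have [pk [hpk ipk]] := IH (y |: B) us hB.
exists (fun z => if z == x then y else pk z); split.
  move=> z; rewrite inE => /orP[/eqP->|zs]; first by rewrite eqxx.
  have zx : z != x by apply: contraNneq xs => <-.
  rewrite (negbTE zx); have := hpk z zs; rewrite !inE negb_or.
  by case/andP => /andP[_ ->] ->.
move=> z w; rewrite !inE => /orP[/eqP->|zs] /orP[/eqP->|ws]; rewrite ?eqxx //.
- have wx : w != x by apply: contraNneq xs => <-.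
  rewrite (negbTE wx) => e; have := hpk w ws; rewrite -e !inE eqxx.
  by case/andP.
- have zx : z != x by apply: contraNneq xs => <-.
  rewrite (negbTE zx) => e; have := hpk z zs; rewrite e !inE eqxx.
  by case/andP.
- have wx : w != x by apply: contraNneq xs => <-.
  have zx : z != x by apply: contraNneq xs => <-.
  rewrite (negbTE wx) (negbTE zx); exact: ipk.
Qed.

End Comb.

End Part5.

Section Part6.
Local Open Scope classical_set_scope.
Local Open Scope ring_scope.

Lemma select {R : realType} {r : nat} (N n : nat) (f : 'I_r -> 'I_N -> R)
  (cs : seq 'I_r) (J : {set 'I_N}) : uniq cs -> (n * size cs + n <= #|J|)%N ->
  exists (M : {set 'I_N}) (K : 'I_r -> {set 'I_N}),
  [/\ M \subset J, (n <= #|M|)%N,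
   (forall c, c \in cs -> [/\ K c \subset J, (forall q, q \in K c -> q \notin M),
      (n <= #|K c|)%N & forall q i, q \in K c -> i \in M -> f c i <= f c q]),
   (forall c c' q, c != c' -> q \in K c -> q \notin K c') &
   (forall c, c \notin cs -> K c = finset.set0)].
Proof.
elim: cs J => [|c cs IH] J.
  move=> _ /= hJ; rewrite muln0 add0n in hJ.
  exists J, (fun _ => finset.set0); split => //.
  by move=> c c' q _; rewrite inE.
move=> /andP[ccs ucs] /= hJ.
have hn : (n <= #|J|)%N by apply: leq_trans hJ; rewrite leq_addl.
have [Kc [KcJ cKc hKc]] := top_sub _ (f c) _ _ hn.
have hJ' : (n * size cs + n <= #|J :\: Kc|)%N.
  rewrite cardsD (finset.setIidPr KcJ) cKc.
  rewrite -(leq_add2r n) subnK //.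
  move: hJ; rewrite /= mulnS; lia.
have [M [K [MJ cM hK hKK hK0]]] := IH _ ucs hJ'.
have MJ2 : M \subset J by apply: fintype.subset_trans MJ _; exact: finset.subsetDl.
have notKc q : q \in Kc -> forall c', c' != c -> q \notin K c'.
  move=> qK c' c'c; case: (boolP (c' \in cs)) => c'cs; last by rewrite hK0 // inE.
  have [KJ _ _ _] := hK c' c'cs; apply: contraTN qK => /(fintype.subsetP KJ).
  by rewrite inE => /andP[].
exists M, (fun x => if x == c then Kc else K x); split => //.
- move=> x; rewrite inE => /orP[/eqP->|xcs]; rewrite ?eqxx.
    split => //.
    + move=> q qK; apply: contraTN qK => /(fintype.subsetP MJ).
      by rewrite inE => /andP[].
    + by rewrite cKc.
    + move=> q i qK iM; apply: hKc => //; exact: (fintype.subsetP MJ).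
  have xc : x != c by apply: contraNneq ccs => <-.
  rewrite (negbTE xc); have [KJ h1 h2 h3] := hK x xcs; split => //.
  apply: fintype.subset_trans KJ _; exact: finset.subsetDl.
- move=> x x' q xx'; case: (eqVneq x c) => [xc|xc]; case: (eqVneq x' c) => [x'c|x'c];
    rewrite ?xc ?x'c ?eqxx ?(negbTE xc) ?(negbTE x'c).
  + by rewrite xc x'c eqxx in xx'.
  + by move=> qK; apply: notKc.
  + move=> qK; apply: contraTN qK => qK; exact: notKc.
  + exact: hKK.
- move=> x; rewrite inE negb_or => /andP[xc xcs]; rewrite (negbTE xc); exact: hK0.
Qed.

End Part6.

Section Part7.
Local Open Scope classical_set_scope.
Local Open Scope ring_scope.

Lemma in_bigU {T : Type} n (P : pred 'I_n) (F : 'I_n -> set T) x :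
  (\big[setU/set0]_(i < n | P i) F i) x <-> exists2 i, P i & F i x.
Proof.
split.
  move: x; elim/big_rec: _ => [x []|i U Pi IH x [Fx|Ux]]; first by exists i.
  exact: IH.
by case=> i Pi Fx; rewrite (bigD1 i) //; left.
Qed.

Lemma rm_bigU {d : measure_display} {T : measurableType d} {R : realType}
  (mu : {finite_measure set T -> \bar R}) n (P : pred 'I_n) (F : 'I_n -> set T) :
  (forall i, measurable (F i)) -> (forall i j, i != j -> F i `&` F j = set0) ->
  rm mu (\big[setU/set0]_(i < n | P i) F i) = \sum_(i < n | P i) rm mu (F i).
Proof.
move=> mF dF.
have mB : measurable (\big[setU/set0]_(i < n | P i) F i).
  by apply: bigsetU_measurable.
apply/eqP; rewrite -eqe -sumEFin -(rmE mu _ mB) measure_bigsetU_ord //.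
  by apply/eqP; apply: eq_bigr => i _; exact: (rmE mu _ (mF i)).
move=> i j _ _ [x [h1 h2]]; apply/eqP; apply: contraT => ij.
by have := dF i j ij; move/seteqP => [/(_ x (conj h1 h2))].
Qed.

Lemma arith1 (u w z e j : nat) : (u < e)%N -> (2 * e + j <= w)%N -> (w <= z + u)%N ->
  (e + j.+1 <= z)%N.
Proof. lia. Qed.

Lemma arith2 (s p r : nat) : (s + p.+1)%N = r -> (0 < s)%N -> (p <= r.-1)%N.
Proof. lia. Qed.

Section HCon.
Context {d : measure_display} {T : measurableType d} {R : realType} {r : nat}.
Context (mu : 'I_r -> {finite_measure set T -> \bar R}).
Context (hna : forall i, non_atomic (mu i)).
Context (S : set T) (mS : measurable S) (hr : (0 < r)%N).
Context (a : 'I_r) (cs : seq 'I_r) (hcs : uniq cs) (acs : a \notin cs).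
Local Notation m i := (rm (mu i)).
Local Notation n := (2 ^ r.-1)%N.
Local Notation N := (r * 2 ^ r.-1)%N.
Context (Q : 'I_N -> set T) (M : {set 'I_N}) (K : 'I_r -> {set 'I_N}).
Context (hQ : forall q, measurable (Q q) /\ Q q `<=` S).
Context (Qdis : forall q q', q != q' -> Q q `&` Q q' = set0).
Context (Qa : forall q, m a (Q q) = m a S / N%:R).
Context (cM : (n <= #|M|)%N).
Context (hK : forall c, c \in cs -> [/\ (forall q, q \in K c -> q \notin M),
   (n <= #|K c|)%N & forall q i, q \in K c -> i \in M -> m c (Q i) <= m c (Q q)]).
Context (hKK : forall c c' q, c != c' -> q \in K c -> q \notin K c').
Context (hK0 : forall c, c \notin cs -> K c = finset.set0).

Definition Z c := \big[setU/set0]_(q < N | q \in K c) Q q.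

Lemma mZ c : measurable (Z c).
Proof. by apply: bigsetU_measurable => q _; case: (hQ q). Qed.

Lemma ZS c : Z c `<=` S.
Proof. by move=> x /in_bigU [q _ /(hQ q).2]. Qed.

Lemma ZQ c i : i \in M -> Z c `&` Q i = set0.
Proof.
move=> iM; apply/seteqP; split => x // [/in_bigU [q qK Qqx] Qix].
case: (boolP (c \in cs)) => ccs; last by move: qK; rewrite hK0 // inE.
have [h1 _ _] := hK c ccs.
have qi : q != i by apply: contraTneq iM => <-; exact: h1.
by move/seteqP: (Qdis q i qi) => [/(_ x (conj Qqx Qix))].
Qed.

Lemma ZZ c c' : c != c' -> Z c `&` Z c' = set0.
Proof.
move=> cc'; apply/seteqP; split => x // [/in_bigU [q qK Qqx] /in_bigU [q' qK' Qqx']].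
have qq' : q != q' by apply: contraTneq qK' => <-; exact: hKK qK.
by move/seteqP: (Qdis q q' qq') => [/(_ x (conj Qqx Qqx'))].
Qed.

Lemma Z_ge c lam : c \in cs -> 0 <= lam -> (forall q, q \in K c -> lam <= m c (Q q)) ->
  n%:R * lam <= m c (Z c).
Proof.
move=> ccs l0 hl; rewrite /Z rm_bigU //; last by move=> q; case: (hQ q).
apply: le_trans (ler_sum _ (fun q qK => hl q qK)).
rewrite sumr_const -[lam *+ _]mulr_natl; apply: ler_wpM2r => //; rewrite ler_nat.
by case: (hK c ccs).
Qed.


Definition ZL (L : seq 'I_r) : set T := fun z => exists2 c, c \in L & Z c z.

Definition Inv (L : seq 'I_r) (p : nat) (P : 'I_N -> set T) (lam : 'I_r -> R)
  (A : 'I_r -> {set 'I_N}) :=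
 [/\ [/\ uniq L, a \in L & (size L + p)%N = r],
     (forall i, i \in M -> [/\ measurable (P i), Q i `<=` P i & P i `<=` Q i `|` ZL L]),
     (forall i j, i \in M -> j \in M -> i != j -> P i `&` P j = set0),
     (forall x i, x \in L -> i \in M -> lam x <= m x (P i)) &
     [/\ (forall x, x \in L -> A x \subset M /\ forall i, i \in A x -> m x (P i) = lam x),
         (forall j, (j < size L)%N -> (2 ^ p + j <= #|A (nth a L j)|)%N),
         (2 ^ p <= #|A a|)%N,
         (forall i, i \in A a -> P i = Q i) &
         lam a = m a S / N%:R]].

Lemma Inv_step L p P lam A c : Inv L p.+1 P lam A -> c \in cs -> c \notin L ->
  exists P' lam' A', Inv (c :: L) p P' lam' A'.
Proof.
move=> [[uL aL sL] hP dP hlam [hA hcard haa hPa hla]] ccs cL.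
have ca : c != a by apply: contraNneq cL => ->.
pose v i := m c (P i).
have [AaM hAa] := hA a aL.
have t0 : (0 < 2 ^ p)%N by rewrite expn_gt0.
have pp : (2 ^ p <= 2 ^ p.+1)%N by rewrite leq_exp2l.
have tM : (2 ^ p <= #|M|)%N.
  by apply: leq_trans pp _; apply: leq_trans haa _; apply: subset_leq_card.
have [lc [[j jM elc] hle hlt hmin]] := ostat _ M v _ t0 tM.
have lc0 : 0 <= lc by rewrite elc; apply: rm_ge0; case: (hP j jM).
have [_ _ hKc] := hK c ccs.
have lcK q : q \in K c -> lc <= m c (Q q).
  move=> qK; apply: hmin; apply: leq_trans pp _; apply: leq_trans haa _.
  apply: subset_leq_card; apply/fintype.subsetP => i iA.
  have iM : i \in M by exact: (fintype.subsetP AaM).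
  by rewrite inE iM /= /v hPa //; apply: hKc.
pose Rz := [set i in M | (v i < lc)%R].
pose dd i := if i \in Rz then lc - v i else 0.
have dd0 i : 0 <= dd i.
  rewrite /dd; case: ifP => //; rewrite inE => /andP[_]; rewrite subr_ge0; exact: ltW.
have pn : (2 ^ p <= 2 ^ r.-1)%N.
  rewrite leq_exp2l //; have : (0 < size L)%N by case: (L) aL.
  exact: arith2 sL.
have hsum : \sum_(i in Rz) dd i <= m c (Z c).
  apply: le_trans (Z_ge c lc ccs lc0 lcK).
  apply: le_trans (_ : \sum_(i in Rz) lc <= _).
    apply: ler_sum => i iR; rewrite /dd iR gerDl oppr_le0 /v; apply: rm_ge0.
    by case: (hP i); move: iR; rewrite inE => /andP[].
  rewrite sumr_const -[lc *+ _]mulr_natl; apply: ler_wpM2r => //; rewrite ler_nat.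
  by apply: leq_trans pn; apply: ltnW.
have [D [hD Ddis Dm D0]] := carve mu hna c (Z c) _ Rz dd (mZ c) dd0 hsum.
have DP i k : i \in M -> P i `&` D k = set0.
  move=> iM; apply/seteqP; split => z // [Pz /(hD k).2 Zz].
  have [_ _ PQ] := hP i iM; case: (PQ z Pz) => [Qz|[c' c'L Zz']].
    by move/seteqP: (ZQ c i iM) => [/(_ z (conj Zz Qz))].
  have cc' : c != c' by apply: contraNneq cL => ->.
  by move/seteqP: (ZZ c c' cc') => [/(_ z (conj Zz Zz'))].
have mPi i : i \in M -> measurable (P i) by move=> iM; case: (hP i iM).
have mP' x i : i \in M -> m x (P i `|` D i) = m x (P i) + m x (D i).
  by move=> iM; rewrite rmU //; [exact: mPi | exact: (hD i).1 | exact: DP].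
have Dnot i : i \notin Rz -> D i = set0 by apply: D0.
have Din i : i \in Rz -> m c (D i) = lc - v i by move=> iR; rewrite Dm // /dd iR.
have cardD (B1 B2 : {set 'I_N}) : (#|B1| <= #|B1 :\: B2| + #|B2|)%N.
  rewrite -{1}(cardsID B2 B1) addnC leq_add2l; apply: subset_leq_card.
  exact: finset.subsetIr.
exists (fun i => P i `|` D i), (fun x => if x == c then lc else lam x),
  (fun x => if x == c then [set i in M | (v i <= lc)%R] else A x :\: Rz).
split.
- split => //; first by rewrite /= cL uL.
  + by rewrite inE aL orbT.
  + by rewrite /= addSnnS sL.
- move=> i iM; have [h1 h2 h3] := hP i iM; split.
  + by apply: measurableU => //; exact: (hD i).1.
  + by move=> z /h2 hz; left.
  + move=> z [/h3 [Qz|[c' c'L Zz]]|Dz]; [by left | right | right].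
      by exists c' => //; rewrite inE c'L orbT.
    by exists c; [exact: mem_head | exact: (hD i).2].
- move=> i k iM kM ik; apply/seteqP; split => z // [[hi|hi] [hk|hk]].
  + by move/seteqP: (dP i k iM kM ik) => [/(_ z (conj hi hk))].
  + by move/seteqP: (DP i k iM) => [/(_ z (conj hi hk))].
  + by move/seteqP: (DP k i kM) => [/(_ z (conj hk hi))].
  + by move/seteqP: (Ddis i k ik) => [/(_ z (conj hi hk))].
- move=> x i; rewrite inE => /orP[/eqP->|xL] iM; rewrite ?eqxx.
    rewrite mP' //; case: (boolP (i \in Rz)) => iR.
      by rewrite Din // /v addrC subrK.
    rewrite Dnot // rm0 addr0; move: iR; rewrite inE iM /= -leNgt //.
  have xc : x != c by apply: contraNneq cL => <-.
  rewrite (negbTE xc) mP' //; apply: le_trans (hlam x i xL iM) _.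
  rewrite lerDl; apply: rm_ge0; exact: (hD i).1.
split.
- move=> x; rewrite inE => /orP[/eqP->|xL]; rewrite ?eqxx.
    split; first by apply/fintype.subsetP => i; rewrite inE => /andP[].
    move=> i; rewrite inE => /andP[iM hi]; rewrite mP' //.
    case: (boolP (i \in Rz)) => iR.
      by rewrite Din // /v addrC subrK.
    rewrite Dnot // rm0 addr0; apply/eqP; rewrite eq_le hi /=.
    by move: iR; rewrite inE iM /= -leNgt.
  have xc : x != c by apply: contraNneq cL => <-.
  rewrite (negbTE xc); have [AxM hAx] := hA x xL; split.
    apply: fintype.subset_trans AxM; exact: finset.subsetDl.
  move=> i; rewrite inE => /andP[iR iA].
  have iM : i \in M by exact: (fintype.subsetP AxM).
  by rewrite Dnot // setU0; apply: hAx.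
- case=> [_|j' hj'].
    by rewrite [nth a (c :: L) 0]/= eqxx addn0.
  rewrite [nth a (c :: L) j'.+1]/=.
  have {}hj' : (j' < size L)%N := hj'.
  have xL : nth a L j' \in L by apply: mem_nth.
  have xc : nth a L j' != c by apply: contraNneq cL => <-.
  rewrite (negbTE xc).
  have h1 := hcard j' hj'; have h2 := cardD (A (nth a L j')) Rz.
  rewrite expnS in h1; exact: (arith1 _ _ _ _ _ hlt h1 h2).
- rewrite eq_sym (negbTE ca).
  have h2 := cardD (A a) Rz; rewrite expnS in haa.
  have := arith1 _ _ _ _ 0 hlt (_ : (2 * 2 ^ p + 0 <= _)%N) h2; rewrite addn1.
  by move=> h; apply: ltnW; apply: h; rewrite addn0.
- move=> i; rewrite eq_sym (negbTE ca) inE => /andP[iR iA].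
  by rewrite Dnot // setU0; apply: hPa.
- by rewrite eq_sym (negbTE ca).
Qed.

Lemma Inv_init : Inv [:: a] r.-1 Q (fun _ => m a S / N%:R) (fun _ => M).
Proof.
split.
- by split => //; [rewrite inE | rewrite /= add1n prednK].
- move=> i iM; split; [by case: (hQ i) | by [] | by move=> z hz; left].
- by move=> i j _ _ ij; apply: Qdis.
- by move=> x i; rewrite inE => /eqP-> _; rewrite Qa.
split.
- by move=> x; rewrite inE => /eqP-> ; split => // i _; rewrite Qa.
- by case=> [|//] _ /=; rewrite addn0.
- by [].
- by [].
- by [].
Qed.

Lemma Inv_iter rest : forall L P lam A, uniq rest ->
  (forall c, c \in rest -> c \in cs /\ c \notin L) -> Inv L (size rest) P lam A ->
  exists L' P' lam' A', [/\ Inv L' 0 P' lam' A', (forall x, x \in rest -> x \in L')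
    & (forall x, x \in L -> x \in L')].
Proof.
elim: rest => [|c rest IH] L P lam A.
  by move=> _ _ h; exists L, P, lam, A; split.
move=> /andP[cr ur] hrest hI.
have [ccs cL] := hrest c (mem_head _ _).
have [P' [lam' [A' hI']]] := Inv_step _ _ _ _ _ _ hI ccs cL.
have hrest' : forall c', c' \in rest -> c' \in cs /\ c' \notin c :: L.
  move=> c' c'r; have c'r2 : c' \in c :: rest by rewrite inE c'r orbT.
  have [h1 h2] := hrest c' c'r2; split => //.
  rewrite inE negb_or h2 andbT; by apply: contraNneq cr => <-.
have [L' [P'' [lam'' [A'' [hI'' h1 h2]]]]] := IH _ _ _ _ ur hrest' hI'.
exists L', P'', lam'', A''; split => //.
- move=> x; rewrite inE => /orP[/eqP->|xr]; last exact: h1.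
  by apply: h2; exact: mem_head.
- by move=> x xL; apply: h2; rewrite inE xL orbT.
Qed.

Lemma H_exists (allcs : forall x, x != a -> x \in cs) (scs : size cs = r.-1) :
  exists H, [/\ measurable H, H `<=` S,
    (((2%:R ^- r.-1)%R)%:E * mu a S <= mu a H)%E &
    gentleman_solution (fun i => mu i) H].
Proof.
have hI0 : Inv [:: a] (size cs) Q (fun _ => m a S / N%:R) (fun _ => M).
  by rewrite scs; exact: Inv_init.
have hcs' : forall c, c \in cs -> c \in cs /\ c \notin [:: a].
  move=> c ccs; split => //; rewrite inE; by apply: contraNneq acs => <-.
have [L [P [lam [A [hI hall _]]]]] := Inv_iter cs [:: a] Q (fun _ => m a S / N%:R)
  (fun _ => M) hcs hcs' hI0.
move: hI => [[uL aL sL] hP dP hlam [hA hcard _ _ hla]].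
have allL x : x \in L by case: (eqVneq x a) => [->//|xa]; apply: hall; apply: allcs.
have N0 : (0 < N)%N by rewrite muln_gt0 hr expn_gt0.
have hc : forall j, (j < size L)%N -> (#|(finset.set0 : {set 'I_N})| + j < #|A (nth a L j)|)%N.
  by move=> j hj; rewrite cards0 add0n; have := hcard j hj; rewrite expn0 add1n.
have [pick [hpick ipick]] := sdr _ _ a (Ordinal N0) L A finset.set0 uL hc.
have pA x : pick x \in A x by have := hpick x (allL x); rewrite inE => /andP[].
have pM x : pick x \in M by have [h _] := hA x (allL x); exact: (fintype.subsetP h).
pose F x := P (pick x).
have mF x : measurable (F x) by case: (hP _ (pM x)).
have dF x y : x != y -> F x `&` F y = set0.
  move=> xy; apply: dP => //; apply: contra xy => /eqP e; apply/eqP.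
  by apply: ipick => //; apply: allL.
have HE : \bigcup_x F x = \big[setU/set0]_(x < r) F x.
  apply/seteqP; split => z.
    by case=> x _ Fz; apply/in_bigU; exists x.
  by move/in_bigU => [x _ Fz]; exists x.
have mH : measurable (\bigcup_x F x).
  by rewrite HE; apply: bigsetU_measurable.
exists (\bigcup_x F x); split => //.
- move=> z [x _ Fz]; have [_ _ h3] := hP _ (pM x).
  case: (h3 z Fz) => [/(hQ _).2 //|[c _ /ZS //]].
- rewrite (rmE _ _ mH) (rmE _ _ mS) -EFinM lee_fin.
  rewrite HE rm_bigU //.
  apply: le_trans (_ : \sum_(x < r) lam a <= _); last first.
    by apply: ler_sum => x _; apply: hlam => //.
  rewrite sumr_const card_ord hla.
  have r0 : (r%:R : R) != 0 by rewrite pnatr_eq0 -lt0n.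
  have t0 : ((2 : R) ^+ r.-1) != 0 by apply: expf_neq0; rewrite pnatr_eq0.
  suff -> : m a S / (r * 2 ^ r.-1)%:R *+ r = 2 ^- r.-1 * m a S by [].
  rewrite -[_ *+ r]mulr_natr natrM natrX; field; by rewrite r0 t0.
- exists F; split; first exact: mF.
  split; first by move=> i j ij; apply: dF.
  split; first by [].

  move=> i j; rewrite (rmE _ _ (mF i)) (rmE _ _ (mF j)) lee_fin.
  have [_ h] := hA i (allL i); rewrite /F h //; exact: hlam.
Qed.

End HCon.

End Part7.

Local Open Scope classical_set_scope.
Local Open Scope ring_scope.
Local Open Scope ereal_scope.

Theorem lemma10 (d : measure_display) (T : measurableType d) (R : realType)
  (r : nat) (hr : (0 < r)%N)
  (mu : 'I_r -> {finite_measure set T -> \bar R})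
  (hna : forall i, non_atomic (mu i))
  (S : set T) (mS : measurable S)
  (hS : \prod_(i < r) mu i S != 0) :
  exists (Rs : 'I_r -> set T) (l : {perm 'I_r}),
    (forall k, measurable (Rs k) /\ Rs k `<=` S) /\
    (forall k k', k != k' -> Rs k `&` Rs k' = set0) /\
    (forall k, mu (l k) (Rs k) = (r%:R^-1)%:E * mu (l k) S) /\
    (forall k j : 'I_r, (k < j)%N -> mu (l j) (Rs k) <= (r%:R^-1)%:E * mu (l j) S) /\
    exists H : set T,
      measurable H /\ H `<=` S /\
      ((2%:R ^- r.-1)%R)%:E * mu (l (Ordinal hr)) S <= mu (l (Ordinal hr)) H /\
      gentleman_solution (fun i => mu i) H.
Proof.
have [Rs [l [hR hdis hl hle]]] := rs_final mu hna S mS hr.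
exists Rs, l; split; first exact: hR.
split; first exact: hdis.
split.
  move=> k; rewrite (rmE _ _ (hR k).1) (rmE _ _ mS) hl -EFinM.
  by rewrite mulrC.
split.
  move=> k j kj; rewrite (rmE _ _ (hR k).1) (rmE _ _ mS) -EFinM lee_fin mulrC.
  exact: hle.
set a := l (Ordinal hr).
set cs := enum (predC1 a).
have hcs : uniq cs by apply: enum_uniq.
have acs : a \notin cs by rewrite mem_enum inE eqxx.
have allcs x : x != a -> x \in cs by rewrite mem_enum inE.
have scs : size cs = r.-1 by rewrite -cardE cardC1 card_ord.
pose N := (r * 2 ^ r.-1)%N.
have N0 : (0 < N)%N by rewrite muln_gt0 hr expn_gt0.
pose beta := (rm (mu a) S / N%:R)%R.
have hbeta : (\sum_(k in [set: 'I_N]%SET) beta <= rm (mu a) S)%R.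
  rewrite sumr_const cardsT card_ord -mulr_natr /beta divfK //.
  by rewrite pnatr_eq0 -lt0n.
have beta0 : forall k : 'I_N, (0 <= beta)%R.
  by move=> _; apply: divr_ge0; [exact: rm_ge0 | exact: ler0n].
have [Q [hQ Qdis Qa _]] := carve mu hna a S _ [set: 'I_N]%SET (fun _ => beta) mS beta0 hbeta.
have hJ : (2 ^ r.-1 * size cs + 2 ^ r.-1 <= #|[set: 'I_N]%SET|)%N.
  rewrite cardsT card_ord scs /N -mulnSr prednK // mulnC //.
have [M [K [_ cM hK hKK hK0]]] := select N (2 ^ r.-1)
  (fun c q => rm (mu c) (Q q)) cs [set: 'I_N]%SET hcs hJ.
have hK' : forall c, c \in cs -> [/\ (forall q, q \in K c -> q \notin M),
   (2 ^ r.-1 <= #|K c|)%N & forall q i, q \in K c -> i \in M ->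
     (rm (mu c) (Q i) <= rm (mu c) (Q q))%R].
  by move=> c ccs; have [_ h1 h2 h3] := hK c ccs; split.
have Qa' : forall q, rm (mu a) (Q q) = (rm (mu a) S / N%:R)%R.
  by move=> q; rewrite Qa // inE.
have [H [mH HS Hb Hg]] := H_exists mu hna S mS hr a cs hcs acs Q M K hQ Qdis Qa'
  cM hK' hKK hK0 allcs scs.
by exists H.
Qed.
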